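(* Let $g:\mathbb{R}\to\mathbb{R}$ be differentiable, $c_0>0$, $G(t)=\int_0^tg(s)\,ds$, assume $\int_{-\infty}^\infty e^{-c_0G(t)}dt<\infty$, let $c_1 = 1/\int_{-\infty}^\infty e^{-c_0G(t)}dt$, and let $Y$ have density $p(t)=c_1e^{-c_0G(t)}$ on $\mathbb{R}$ with distribution function $F(x)=P(Y\le x)$. Assume: (H1) $g$ is non-decreasing, $g(t)\ge 0$ for $t>0$ and $g(t)\le 0$ for $t\le 0$; (H2) there is $c_2<\infty$ such that for all $x$, $\min\big(1/c_1, 1/|c_0 g(x)|\big)\,(|x| + 3/c_1)\,\max(1, c_0|g'(x)|) \le c_2$. Then for all real $x$: $$\min(1-F(x),F(x))\le d_1p(x),\qquad |p'(x)|\min(F(x),1-F(x))\le d_2p^2(x),$$ $$M(x)\,\big|(p'/p)'(x)\big|\le d_3p(x),\qquad M(x)\le d_4p(x),$$ with $d_1=1/c_1$, $d_2=1$, $d_3=c_2$, $d_4=c_2$, where $$M(x)=\min\Big(E|Y|I_{\{Y\le x\}}+E|Y|\,F(x),\; E|Y|I_{\{Y>x\}}+E|Y|\,(1-F(x))\Big).$$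
   Context: In (H2), $1/|c_0g(x)|$ is interpreted as $+\infty$ when $g(x)=0$. $I_A$ denotes the indicator of the event $A$. *)

(* Defs.v *)
From Stdlib Require Import Reals.
From Coquelicot Require Import Coquelicot.
Open Scope R_scope.

Definition Gint (g : R -> R) (t : R) : R := RInt g 0 t.

Definition udens (c0 : R) (g : R -> R) (t : R) : R := exp (- (c0 * Gint g t)).

Definition Zc (c0 : R) (g : R -> R) : R :=
  RInt_gen (udens c0 g) (Rbar_locally m_infty) (Rbar_locally p_infty).

Definition cnorm (c0 : R) (g : R -> R) : R := / Zc c0 g.

Definition dens (c0 : R) (g : R -> R) (t : R) : R := cnorm c0 g * udens c0 g t.

Definition cdf (c0 : R) (g : R -> R) (x : R) : R :=
  RInt_gen (dens c0 g) (Rbar_locally m_infty) (at_point x).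

Definition EabsY (c0 : R) (g : R -> R) : R :=
  RInt_gen (fun t => Rabs t * dens c0 g t) (Rbar_locally m_infty) (Rbar_locally p_infty).

Definition EabsY_le (c0 : R) (g : R -> R) (x : R) : R :=
  RInt_gen (fun t => Rabs t * dens c0 g t) (Rbar_locally m_infty) (at_point x).

Definition EabsY_gt (c0 : R) (g : R -> R) (x : R) : R :=
  RInt_gen (fun t => Rabs t * dens c0 g t) (at_point x) (Rbar_locally p_infty).

Definition Mfun (c0 : R) (g : R -> R) (x : R) : R :=
  Rmin (EabsY_le c0 g x + EabsY c0 g * cdf c0 g x)
       (EabsY_gt c0 g x + EabsY c0 g * (1 - cdf c0 g x)).

(* min(1/c1, 1/|c0 g(x)|), with 1/|c0 g(x)| = +oo when g(x) = 0 *)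
Definition minfac (c0 : R) (g : R -> R) (x : R) : R :=
  if Req_EM_T (g x) 0 then / cnorm c0 g
  else Rmin (/ cnorm c0 g) (/ Rabs (c0 * g x)).

(* Main.v *)
Require Import Defs.
From Stdlib Require Import Reals Lra FunctionalExtensionality.
From Coquelicot Require Import Coquelicot.
Open Scope R_scope.

Lemma ballR (x e y : R) : ball x e y <-> Rabs (y - x) < e.
Proof. reflexivity. Qed.

Lemma mono_lim (F : R -> R) (x K : R) :
  (forall b1 b2, x <= b1 -> b1 <= b2 -> F b1 <= F b2) ->
  (forall b, x <= b -> F b <= K) ->
  exists l, l <= K /\ (forall b, x <= b -> F b <= l) /\
    filterlim F (Rbar_locally p_infty) (locally l).
Proof.
  intros Hm HK.
  set (E := fun y => exists b, x <= b /\ y = F b).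
  assert (HE1 : bound E) by (exists K; intros y [b [Hb ->]]; auto).
  assert (HE2 : exists y, E y) by (exists (F x); exists x; split; [lra|auto]).
  destruct (completeness E HE1 HE2) as [l [Hub Hlub]].
  exists l; split; [|split].
  - apply Hlub; intros y [b [Hb ->]]; auto.
  - intros b Hb; apply Hub; exists b; auto.
  - apply filterlim_locally; intros eps.
    assert (Hex : exists b0, x <= b0 /\ l - eps < F b0).
    { destruct (Classical_Prop.classic (exists b0, x <= b0 /\ l - eps < F b0)) as [H|H]; auto.
      exfalso.
      assert (l <= l - eps).
      { apply Hlub; intros y [b [Hb ->]].
        destruct (Rle_lt_dec (F b) (l - eps)); auto.
        exfalso; apply H; exists b; auto. }
      destruct eps; simpl in *; lra. }
    destruct Hex as [b0 [Hb0 Hlt]].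
    exists (Rmax x b0); intros b Hb.
    apply ballR.
    assert (F b0 <= F b) by (apply Hm; auto; pose proof (Rmax_r x b0); lra).
    assert (F b <= l) by (apply Hub; exists b; split; auto; pose proof (Rmax_l x b0); lra).
    apply Rabs_lt_between'; lra.
Qed.

Lemma gen_right_of_lim (h : R -> R) x l :
  (forall t, continuous h t) ->
  filterlim (fun b => RInt h x b) (Rbar_locally p_infty) (locally l) ->
  is_RInt_gen h (at_point x) (Rbar_locally p_infty) l.
Proof.
  intros Hc Hl.
  unfold is_RInt_gen.
  apply (filterlimi_lim_ext_loc (fun ab : R * R => RInt h (fst ab) (snd ab)) (fun ab : R*R => is_RInt h (fst ab) (snd ab))).
  - apply filter_forall; intros [a b].
    apply (RInt_correct h a b), ex_RInt_continuous; auto.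
  - intros P HP.
    specialize (Hl P HP).
    unfold filtermap in *.
    apply Filter_prod with (Q := fun a => a = x) (R := fun b => P (RInt h x b)); auto.
    + reflexivity.
    + intros a b -> Hb; simpl; auto.
Qed.

Lemma gen_left_of_lim (h : R -> R) x l :
  (forall t, continuous h t) ->
  filterlim (fun a => RInt h a x) (Rbar_locally m_infty) (locally l) ->
  is_RInt_gen h (Rbar_locally m_infty) (at_point x) l.
Proof.
  intros Hc Hl.
  unfold is_RInt_gen.
  apply (filterlimi_lim_ext_loc (fun ab : R * R => RInt h (fst ab) (snd ab)) (fun ab : R*R => is_RInt h (fst ab) (snd ab))).
  - apply filter_forall; intros [a b].
    apply (RInt_correct h a b), ex_RInt_continuous; auto.
  - intros P HP.
    specialize (Hl P HP).
    unfold filtermap in *.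
    apply Filter_prod with (R := fun a => a = x) (Q := fun b => P (RInt h b x)); auto.
    + reflexivity.
    + intros a b Ha ->; simpl; auto.
Qed.

Lemma lim_of_gen_right (h : R -> R) x l :
  is_RInt_gen h (at_point x) (Rbar_locally p_infty) l ->
  filterlim (fun b => RInt h x b) (Rbar_locally p_infty) (locally l).
Proof.
  intros H.
  apply filterlim_locally; intros eps.
  destruct (proj1 (filterlimi_locally _ _) H eps) as [Q RR HQ HR Hqr].
  apply (filter_imp RR); auto.
  intros b Rb; destruct (Hqr x b HQ Rb) as [z [Hz Hb]].
  rewrite (is_RInt_unique h x b z Hz); exact Hb.
Qed.

Lemma gen_full_bound (h : R -> R) Z :
  (forall t, 0 <= h t) -> (forall t, continuous h t) ->
  is_RInt_gen h (Rbar_locally m_infty) (Rbar_locally p_infty) Z ->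
  forall a b, a <= b -> RInt h a b <= Z.
Proof.
  intros Hp Hc H a b Hab.
  apply Rnot_lt_le; intros Hlt.
  set (e := RInt h a b - Z).
  assert (He : 0 < e) by (unfold e; lra).
  destruct (proj1 (filterlimi_locally _ _) H (mkposreal e He)) as [Q RR [M1 HQ] [M2 HR] Hqr].
  set (a' := Rmin a (M1 - 1)). set (b' := Rmax b (M2 + 1)).
  assert (Ha' : a' < M1) by (unfold a'; pose proof (Rmin_r a (M1-1)); lra).
  assert (Hb' : M2 < b') by (unfold b'; pose proof (Rmax_r b (M2+1)); lra).
  destruct (Hqr a' b' (HQ _ Ha') (HR _ Hb')) as [z [Hz Hb]].
  pose proof (is_RInt_unique h a' b' z Hz) as Hz2; clear Hz; rename Hz2 into Hz.
  apply ballR in Hb. simpl in Hb.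
  assert (Hex : forall u v, ex_RInt h u v) by (intros; apply (ex_RInt_continuous (V:=R_CompleteNormedModule)); auto).
  assert (RInt h a b <= RInt h a' b').
  { rewrite <- (RInt_Chasles h a' a b') by auto.
    rewrite <- (RInt_Chasles h a b b') by auto.
    assert (0 <= RInt h a' a).
    { apply RInt_ge_0; auto. unfold a'; apply Rmin_l. }
    assert (0 <= RInt h b b').
    { apply RInt_ge_0; auto. unfold b'; apply Rmax_l. }
    simpl; unfold plus; simpl; lra. }
  rewrite Hz in H0.
  apply Rabs_lt_between' in Hb. unfold e in Hb. lra.
Qed.

Definition tailR (h : R -> R) x := RInt_gen h (at_point x) (Rbar_locally p_infty).

Lemma exR (h : R -> R) a b : (forall t, continuous h t) -> ex_RInt h a b.
Proof. intros; apply (ex_RInt_continuous (V:=R_CompleteNormedModule)); auto. Qed.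

Lemma RInt_nonneg_mono (h : R -> R) x b1 b2 :
  (forall t, continuous h t) -> (forall t, x <= t -> 0 <= h t) ->
  x <= b1 -> b1 <= b2 -> RInt h x b1 <= RInt h x b2.
Proof.
  intros Hc Hp H1 H2.
  rewrite <- (RInt_Chasles h x b1 b2) by (apply exR; auto).
  assert (0 <= RInt h b1 b2) by (apply RInt_ge_0; auto; [apply exR; auto| intros; apply Hp; lra]).
  simpl; unfold plus; simpl; lra.
Qed.

Lemma tailR_spec (h : R -> R) x K :
  (forall t, continuous h t) -> (forall t, x <= t -> 0 <= h t) ->
  (forall b, x <= b -> RInt h x b <= K) ->
  is_RInt_gen h (at_point x) (Rbar_locally p_infty) (tailR h x) /\
  tailR h x <= K /\ (forall b, x <= b -> RInt h x b <= tailR h x).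
Proof.
  intros Hc Hp HK.
  destruct (mono_lim (fun b => RInt h x b) x K) as [l [Hl1 [Hl2 Hl3]]].
  - intros; apply RInt_nonneg_mono; auto.
  - auto.
  - assert (Hg : is_RInt_gen h (at_point x) (Rbar_locally p_infty) l)
      by (apply gen_right_of_lim; auto).
    assert (E : tailR h x = l) by (unfold tailR; apply (is_RInt_gen_unique h l Hg)).
    rewrite E; auto.
Qed.

Lemma tailR_nonneg (h : R -> R) x K :
  (forall t, continuous h t) -> (forall t, x <= t -> 0 <= h t) ->
  (forall b, x <= b -> RInt h x b <= K) -> 0 <= tailR h x.
Proof.
  intros Hc Hp HK. destruct (tailR_spec h x K Hc Hp HK) as [_ [_ H]].
  specialize (H x (Rle_refl x)). rewrite RInt_point in H. exact H.
Qed.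

Lemma tailR_chasles (h : R -> R) x y :
  (forall t, continuous h t) ->
  is_RInt_gen h (at_point y) (Rbar_locally p_infty) (tailR h y) ->
  is_RInt_gen h (at_point x) (Rbar_locally p_infty) (tailR h x) ->
  tailR h x = RInt h x y + tailR h y.
Proof.
  intros Hc Hy Hx.
  assert (H1 : is_RInt_gen h (at_point x) (at_point y) (RInt h x y)).
  { apply is_RInt_gen_at_point. apply (RInt_correct h x y). apply exR; auto. }
  pose proof (is_RInt_gen_Chasles h y _ _ H1 Hy) as H2.
  unfold tailR at 1. rewrite (is_RInt_gen_unique h _ H2). reflexivity.
Qed.

Lemma RInt_opp_var (f : R -> R) a b :
  (forall t, continuous f t) -> RInt (fun s => f (- s)) a b = RInt f (- b) (- a).
Proof.
  intros Hc.
  pose proof (RInt_comp_lin f (-1) 0 a b) as H.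
  replace (-1 * a + 0) with (- a) in H by ring.
  replace (-1 * b + 0) with (- b) in H by ring.
  rewrite <- (opp_RInt_swap f (-a) (-b)) by (apply exR; auto).
  rewrite <- H by (apply exR; auto).
  rewrite <- RInt_opp.
  2:{ apply (ex_RInt_comp_lin f (-1) 0 a b).
      replace (-1 * a + 0) with (- a) by ring.
      replace (-1 * b + 0) with (- b) by ring. apply exR; auto. }
  apply RInt_ext; intros t _.
  replace (-1 * t + 0) with (- t) by ring.
  unfold scal, opp; simpl; unfold mult; simpl. ring.
Qed.

Lemma transfer_left (f : R -> R) y l :
  (forall t, continuous f t) ->
  is_RInt_gen (fun s => f (- s)) (at_point y) (Rbar_locally p_infty) l ->
  is_RInt_gen f (Rbar_locally m_infty) (at_point (- y)) l.
Proof.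
  intros Hc H.
  apply gen_left_of_lim; auto.
  apply lim_of_gen_right in H.
  assert (Hop : filterlim Ropp (Rbar_locally m_infty) (Rbar_locally p_infty))
    by apply (filterlim_Rbar_opp m_infty).
  pose proof (filterlim_comp _ _ _ _ _ _ _ _ Hop H) as H2.
  eapply filterlim_ext; [|exact H2].
  intros a; simpl. rewrite RInt_opp_var by auto. rewrite Ropp_involutive. reflexivity.
Qed.

Lemma RInt_scalR (f : R -> R) a b c : (forall t, continuous f t) ->
  RInt (fun s => c * f s) a b = c * RInt f a b.
Proof. intros; apply (RInt_scal f a b c); apply exR; auto. Qed.

Lemma RInt_plusR (f g : R -> R) a b : (forall t, continuous f t) -> (forall t, continuous g t) ->
  RInt (fun s => f s + g s) a b = RInt f a b + RInt g a b.
Proof. intros; apply (RInt_plus f g a b); apply exR; auto. Qed.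

Lemma RInt_minusR (f g : R -> R) a b : (forall t, continuous f t) -> (forall t, continuous g t) ->
  RInt (fun s => f s - g s) a b = RInt f a b - RInt g a b.
Proof. intros; apply (RInt_minus f g a b); apply exR; auto. Qed.

Record AHyp (q k : R -> R) (Z : R) : Prop := {
  ah_pos : forall t, 0 < q t;
  ah_der : forall t, is_derive q t (- (k t * q t));
  ah_kc : forall t, continuous k t;
  ah_km : forall s t, s <= t -> k s <= k t;
  ah_Z : 0 < Z;
  ah_sup : forall x s, 0 <= x -> 0 <= s -> q (x + s) <= Z * q x * q s;
  ah_I : forall a b, a <= b -> RInt q a b <= 1 }.


Lemma ah_cont q k Z : AHyp q k Z -> forall t, continuous q t.
Proof.
  intros H t. apply (ex_derive_continuous (K:=R_AbsRing) (V:=R_NormedModule)).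
  exists (- (k t * q t)). apply (ah_der _ _ _ H).
Qed.

Lemma ah_tail q k Z : AHyp q k Z -> forall x,
  is_RInt_gen q (at_point x) (Rbar_locally p_infty) (tailR q x) /\
  0 <= tailR q x /\ tailR q x <= 1 /\ (forall b, x <= b -> RInt q x b <= tailR q x).
Proof.
  intros H x.
  assert (Hc := ah_cont _ _ _ H).
  assert (Hp : forall t, x <= t -> 0 <= q t) by (intros; left; apply (ah_pos _ _ _ H)).
  assert (HK : forall b, x <= b -> RInt q x b <= 1) by (intros; apply (ah_I _ _ _ H); auto).
  destruct (tailR_spec q x 1 Hc Hp HK) as [A [B C]].
  repeat split; auto. eapply tailR_nonneg; eauto.
Qed.

Lemma ah_tail_formula q k Z : AHyp q k Z -> forall t, tailR q t = tailR q 0 - RInt q 0 t.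
Proof.
  intros H t.
  assert (Hc := ah_cont _ _ _ H).
  destruct (Rle_lt_dec 0 t) as [Ht|Ht].
  - rewrite (tailR_chasles q 0 t Hc) by (apply (ah_tail _ _ _ H)). simpl; lra.
  - rewrite (tailR_chasles q t 0 Hc) by (apply (ah_tail _ _ _ H)).
    rewrite <- (opp_RInt_swap q t 0) by (apply exR; auto).
    unfold opp; simpl. lra.
Qed.

Lemma ah_tail_der q k Z : AHyp q k Z -> forall t, is_derive (tailR q) t (- q t).
Proof.
  intros H t.
  assert (Hc := ah_cont _ _ _ H).
  apply (is_derive_ext (fun t => tailR q 0 - RInt q 0 t)).
  { intros; symmetry; apply (ah_tail_formula _ _ _ H). }
  assert (Hc0 : is_derive (fun _ : R => tailR q 0) t 0) by apply (is_derive_const (tailR q 0) t).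
  assert (Hr : is_derive (RInt q 0) t (q t)).
  { apply (is_derive_RInt q (RInt q 0) 0 t).
    + apply filter_forall; intros b. apply (RInt_correct q 0 b). apply exR; auto.
    + auto. }
  pose proof (is_derive_minus _ _ _ _ _ Hc0 Hr) as HH.
  replace (- q t) with (minus 0 (q t)) by (unfold minus, plus, opp; simpl; ring).
  exact HH.
Qed.


Lemma ah_tail_cont q k Z : AHyp q k Z -> forall t, continuous (tailR q) t.
Proof.
  intros H t. apply (ex_derive_continuous (K:=R_AbsRing) (V:=R_NormedModule)).
  exists (- q t). apply (ah_tail_der _ _ _ H).
Qed.

Lemma ah_L2 q k Z : AHyp q k Z -> forall x, 0 <= x -> tailR q x <= Z * tailR q 0 * q x.
Proof.
  intros H x Hx.
  assert (Hc := ah_cont _ _ _ H).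
  assert (Hp : forall t, x <= t -> 0 <= q t) by (intros; left; apply (ah_pos _ _ _ H)).
  apply (tailR_spec q x _ Hc Hp).
  intros b Hb.
  pose proof (RInt_comp_lin q 1 x 0 (b - x)) as E.
  replace (1 * 0 + x) with x in E by ring.
  replace (1 * (b - x) + x) with b in E by ring.
  assert (E2 : RInt q x b = RInt (fun s => q (x + s)) 0 (b - x)).
  { rewrite <- E by (apply exR; auto). apply RInt_ext; intros s _. unfold scal; simpl; unfold mult; simpl.
      rewrite Rmult_1_l. f_equal. ring. }
  rewrite E2.
  assert (Hcs : forall s, continuous (fun s => q (x + s)) s).
  { intros s. apply (continuous_comp (fun s => x + s) q).
    apply (continuous_plus (fun _ => x) (fun s => s)); [apply continuous_const|apply continuous_id].
    apply Hc. }
  assert (Hcs2 : forall s, continuous (fun s => (Z * q x) * q s) s).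
  { intros s. apply (continuous_mult (fun _ => Z * q x) q); [apply continuous_const | auto]. }
  apply Rle_trans with (RInt (fun s => (Z * q x) * q s) 0 (b - x)).
  - apply (RInt_le (fun s => q (x + s)) (fun s => (Z * q x) * q s) 0 (b - x)).
    + lra.
    + apply exR; auto.
    + apply exR; auto.
    + intros s Hs. apply (ah_sup _ _ _ H); lra.
  - rewrite (RInt_scalR q 0 (b - x) (Z * q x)) by auto.
    unfold scal; simpl; unfold mult; simpl.
    destruct (ah_tail _ _ _ H 0) as [_ [_ [_ T]]].
    assert (0 <= Z * q x).
    { apply Rmult_le_pos; [left; apply (ah_Z _ _ _ H) | left; apply (ah_pos _ _ _ H)]. }
    specialize (T (b - x) ltac:(lra)).
    replace (Z * tailR q 0 * q x) with ((Z * q x) * tailR q 0) by ring.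
    apply Rmult_le_compat_l; auto.
Qed.

Lemma ah_kq_cont q k Z : AHyp q k Z -> forall t, continuous (fun t => k t * q t) t.
Proof.
  intros H t. apply (continuous_mult k q); [apply (ah_kc _ _ _ H) | apply (ah_cont _ _ _ H)].
Qed.

Lemma ah_kq_int q k Z : AHyp q k Z -> forall a b, RInt (fun t => k t * q t) a b = q a - q b.
Proof.
  intros H a b.
  assert (D : forall t, is_derive (fun t => - q t) t (k t * q t)).
  { intros t. pose proof (is_derive_opp _ _ _ (ah_der _ _ _ H t)) as D.
    replace (k t * q t) with (opp (- (k t * q t))) by (unfold opp; simpl; ring). exact D. }
  pose proof (is_RInt_derive (fun t => - q t) (fun t => k t * q t) a b
     (fun t _ => D t) (fun t _ => ah_kq_cont _ _ _ H t)) as I.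
  rewrite (is_RInt_unique _ _ _ _ I). unfold minus, plus, opp; simpl. ring.
Qed.

Lemma ah_L3 q k Z : AHyp q k Z -> forall x, 0 < k x -> tailR q x <= q x / k x.
Proof.
  intros H x Hk.
  assert (Hc := ah_cont _ _ _ H).
  assert (Hp : forall t, x <= t -> 0 <= q t) by (intros; left; apply (ah_pos _ _ _ H)).
  apply (tailR_spec q x _ Hc Hp).
  intros b Hb.
  assert (I1 : RInt (fun t => k x * q t) x b <= RInt (fun t => k t * q t) x b).
  { apply (RInt_le (fun t => k x * q t) (fun t => k t * q t) x b Hb).
    - apply exR. intros t; apply (continuous_mult (fun _ => k x) q); [apply continuous_const|auto].
    - apply exR. apply (ah_kq_cont _ _ _ H).
    - intros t Ht. apply Rmult_le_compat_r; [apply Hp; lra|]. apply (ah_km _ _ _ H); lra. }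
  rewrite (RInt_scalR q x b (k x) Hc) in I1.
  rewrite (ah_kq_int _ _ _ H) in I1.
  pose proof (ah_pos _ _ _ H b).
  apply (Rmult_le_reg_l (k x)); auto.
  field_simplify; [|lra]. lra.
Qed.

Lemma ah_absq_cont q k Z : AHyp q k Z -> forall t, continuous (fun t => Rabs t * q t) t.
Proof.
  intros H t. apply (continuous_mult Rabs q); [apply continuous_Rabs | apply (ah_cont _ _ _ H)].
Qed.

Lemma ah_L4 q k Z : AHyp q k Z -> forall x m, 0 <= x ->
  (forall t, x <= t -> tailR q t <= m * q t) ->
  is_RInt_gen (fun t => Rabs t * q t) (at_point x) (Rbar_locally p_infty)
     (tailR (fun t => Rabs t * q t) x) /\
  tailR (fun t => Rabs t * q t) x <= (x + m) * tailR q x.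
Proof.
  intros H x m Hx Hm.
  assert (Hc := ah_cont _ _ _ H).
  assert (Htc := ah_tail_cont _ _ _ H).
  assert (Hac := ah_absq_cont _ _ _ H).
  assert (Hpos := ah_pos _ _ _ H).
  assert (m0 : 0 <= m).
  { destruct (ah_tail _ _ _ H x) as [_ [T0 _]].
    specialize (Hm x (Rle_refl x)). specialize (Hpos x).
    destruct (Rle_lt_dec 0 m); auto.
    assert (m * q x < 0) by (apply Rmult_neg_pos; auto). lra. }
  assert (Hp : forall t, x <= t -> 0 <= Rabs t * q t).
  { intros; apply Rmult_le_pos; [apply Rabs_pos| left; auto]. }
  destruct (tailR_spec (fun t => Rabs t * q t) x ((x + m) * tailR q x) Hac Hp) as [A [B _]].
  2: split; auto.
  intros b Hb.
  assert (Hdf : forall t, is_derive (fun t => (t - x) * tailR q t) t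
                   (tailR q t - (t - x) * q t)).
  { intros t.
    assert (D1 : is_derive (fun t => t - x) t 1).
    { auto_derive; [exact I | reflexivity]. }
    pose proof (is_derive_mult _ _ _ _ _ D1 (ah_tail_der _ _ _ H t) Rmult_comm) as D.
    replace (tailR q t - (t - x) * q t) with
      (plus (mult 1 (tailR q t)) (mult (t - x) (- q t)))
      by (unfold plus, mult; simpl; ring).
    exact D. }
  assert (Hdfc : forall t, continuous (fun t => tailR q t - (t - x) * q t) t).
  { intros t. apply (continuous_minus (fun t => tailR q t) (fun t => (t - x) * q t)); auto.
    apply (continuous_mult (fun t => t - x) q); auto.
    apply (continuous_minus (fun t => t) (fun _ => x)); [apply continuous_id|apply continuous_const]. }
  pose proof (is_RInt_derive _ _ x b (fun t _ => Hdf t) (fun t _ => Hdfc t)) as I.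
  apply is_RInt_unique in I.
  assert (Hlc : forall t, continuous (fun t => (t - x) * q t) t).
  { intros t. apply (continuous_mult (fun t => t - x) q); auto.
    apply (continuous_minus (fun t => t) (fun _ => x)); [apply continuous_id|apply continuous_const]. }
  rewrite (RInt_minusR _ _ x b Htc Hlc) in I.
  assert (E : RInt (fun t => Rabs t * q t) x b = RInt (fun t => x * q t + (t - x) * q t) x b).
  { apply RInt_ext; intros t Ht. rewrite Rmin_left in Ht by lra. rewrite Rmax_right in Ht by lra.
    rewrite Rabs_right by lra. assert (EE : t * q t = x * q t + (t - x) * q t) by ring. exact EE. }
  rewrite E.
  assert (Hxq : forall t, continuous (fun t => x * q t) t).
  { intros t; apply (continuous_mult (fun _ => x) q); [apply continuous_const|auto]. }
  rewrite (RInt_plusR (fun t => x * q t) (fun t => (t - x) * q t) x b Hxq Hlc).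
  rewrite (RInt_scalR q x b x Hc).
  assert (It : RInt (tailR q) x b <= RInt (fun t => m * q t) x b).
  { apply (RInt_le (tailR q) (fun t => m * q t) x b Hb).
    - apply exR; auto.
    - apply exR; intros t; apply (continuous_mult (fun _ => m) q); [apply continuous_const|auto].
    - intros t Ht; apply Hm; lra. }
  rewrite (RInt_scalR q x b m Hc) in It.
  destruct (ah_tail _ _ _ H x) as [_ [_ [_ Tx]]].
  destruct (ah_tail _ _ _ H b) as [_ [Tb _]].
  specialize (Tx b Hb).
  unfold minus, plus, opp in I; simpl in I.
  assert (0 <= (b - x) * tailR q b) by (apply Rmult_le_pos; lra).
  assert ((x + m) * RInt q x b <= (x + m) * tailR q x) by (apply Rmult_le_compat_l; lra).
  nra.
Qed.

Lemma ah_W0 q k Z : AHyp q k Z ->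
  is_RInt_gen (fun t => Rabs t * q t) (at_point 0) (Rbar_locally p_infty)
     (tailR (fun t => Rabs t * q t) 0) /\
  tailR (fun t => Rabs t * q t) 0 <= Z * (tailR q 0) ^ 2.
Proof.
  intros H.
  destruct (ah_L4 q k Z H 0 (Z * tailR q 0) (Rle_refl 0)) as [A B].
  { intros t Ht. pose proof (ah_L2 _ _ _ H t Ht). lra. }
  split; auto. replace (Z * tailR q 0 ^ 2) with ((0 + Z * tailR q 0) * tailR q 0) by ring. auto.
Qed.

Definition mf (Z ky : R) := if Req_EM_T ky 0 then Z else Rmin Z (/ Rabs ky).

Lemma ah_final q k Z y E : AHyp q k Z -> 0 <= y -> 0 <= k y -> E <= Z ->
  tailR q y <= Z * q y /\
  Rabs (k y) * q y * tailR q y <= q y ^ 2 /\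
  is_RInt_gen (fun t => Rabs t * q t) (at_point y) (Rbar_locally p_infty)
     (tailR (fun t => Rabs t * q t) y) /\
  tailR (fun t => Rabs t * q t) y + E * tailR q y <= mf Z (k y) * (y + 3 * Z) * q y.
Proof.
  intros H Hy Hky HE.
  assert (HZ := ah_Z _ _ _ H).
  assert (Hpos := ah_pos _ _ _ H).
  destruct (ah_tail _ _ _ H 0) as [_ [T00 [T01 _]]].
  assert (HT1 : forall t, y <= t -> tailR q t <= Z * q t).
  { intros t Ht. pose proof (ah_L2 _ _ _ H t ltac:(lra)).
    pose proof (Hpos t). assert (Z * tailR q 0 * q t <= Z * 1 * q t).
    { apply Rmult_le_compat_r; [lra|]. apply Rmult_le_compat_l; lra. } lra. }
  assert (Hm : forall t, y <= t -> tailR q t <= mf Z (k y) * q t).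
  { intros t Ht. unfold mf. destruct (Req_EM_T (k y) 0) as [E0|E0]; [apply HT1; auto|].
    assert (Hk : 0 < k y) by lra.
    assert (Hkt : k y <= k t) by (apply (ah_km _ _ _ H); auto).
    pose proof (ah_L3 _ _ _ H t ltac:(lra)).
    assert (q t / k t <= / Rabs (k y) * q t).
    { rewrite Rabs_right by lra. unfold Rdiv. rewrite Rmult_comm.
      apply Rmult_le_compat_r; [left; auto|]. apply Rinv_le_contravar; lra. }
    unfold Rmin; destruct (Rle_dec Z (/ Rabs (k y))); [apply HT1; auto | lra]. }
  assert (Hmz : 0 <= mf Z (k y) <= Z).
  { unfold mf. destruct (Req_EM_T (k y) 0); [lra|].
    assert (0 < / Rabs (k y)) by (apply Rinv_0_lt_compat; apply Rabs_pos_lt; auto).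
    unfold Rmin; destruct (Rle_dec Z (/ Rabs (k y))); lra. }
  destruct (ah_L4 _ _ _ H y (mf Z (k y)) Hy Hm) as [A B].
  destruct (ah_tail _ _ _ H y) as [_ [P0 _]].
  pose proof (Hm y (Rle_refl y)) as Py.
  split; [apply HT1; lra|]. split; [|split; auto].
  - unfold mf in *. destruct (Req_EM_T (k y) 0) as [E0|E0].
    + rewrite E0, Rabs_R0. pose proof (Hpos y). nra.
    + pose proof (ah_L3 _ _ _ H y ltac:(lra)). rewrite Rabs_right by lra.
      pose proof (Hpos y).
      assert (k y * tailR q y <= q y).
      { apply Rmult_le_reg_r with (/ k y). apply Rinv_0_lt_compat; lra.
        rewrite Rmult_comm, <- Rmult_assoc, Rinv_l by lra. unfold Rdiv in H0; lra. }
      nra.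
  - set (m := mf Z (k y)) in *. set (P := tailR q y) in *.
    assert (E * P <= Z * P) by (apply Rmult_le_compat_r; lra).
    assert ((y + m + Z) * P <= (y + m + Z) * (m * q y)) by (apply Rmult_le_compat_l; lra).
    assert (0 <= m * q y) by (pose proof (Hpos y); nra).
    nra.
Qed.

Lemma g_cont (g : R -> R) : (forall x, ex_derive g x) -> forall t, continuous g t.
Proof. intros Hd t. apply (ex_derive_continuous (K:=R_AbsRing) (V:=R_NormedModule)). auto. Qed.

Lemma Gint_der (g : R -> R) : (forall t, continuous g t) -> forall t, is_derive (Gint g) t (g t).
Proof.
  intros Hc t. unfold Gint.
  apply (is_derive_RInt g (RInt g 0) 0 t).
  - apply filter_forall; intros b. apply (RInt_correct g 0 b). apply exR; auto.
  - auto.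
Qed.

Lemma dens_der (c0 : R) (g : R -> R) : (forall t, continuous g t) ->
  forall t, is_derive (dens c0 g) t (- ((c0 * g t) * dens c0 g t)).
Proof.
  intros Hc t. unfold dens, udens.
  pose proof (Gint_der g Hc) as D.
  auto_derive.
  - exists (g t). apply D.
  - replace (Derive (fun x : R => Gint g x) t) with (g t) by (symmetry; apply (is_derive_unique _ _ _ (D t))). ring.
Qed.

Lemma exp_le (a b : R) : a <= b -> exp a <= exp b.
Proof. intros [H|H]; [left; apply exp_increasing; auto | rewrite H; lra]. Qed.

Lemma Gint_shift (g : R -> R) a b : (forall t, continuous g t) ->
  Gint g (a + b) - Gint g a = RInt (fun s => g (a + s)) 0 b.
Proof.
  intros Hc. unfold Gint.
  rewrite <- (RInt_Chasles g 0 a (a + b)) by (apply exR; auto).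
  pose proof (RInt_comp_lin g 1 a 0 b) as E.
  replace (1 * 0 + a) with a in E by ring.
  replace (1 * b + a) with (a + b) in E by ring.
  assert (E2 : RInt g a (a + b) = RInt (fun s => g (a + s)) 0 b).
  { rewrite <- E by (apply exR; auto). apply RInt_ext; intros s _.
    unfold scal; simpl; unfold mult; simpl. rewrite Rmult_1_l. f_equal. ring. }
  simpl. unfold plus; simpl. rewrite E2. ring.
Qed.

Lemma shift_cont (g : R -> R) a : (forall t, continuous g t) -> forall s, continuous (fun s => g (a + s)) s.
Proof.
  intros Hc s. apply (continuous_comp (fun s => a + s) g).
  apply (continuous_plus (fun _ => a) (fun s => s)); [apply continuous_const|apply continuous_id].
  apply Hc.
Qed.

Lemma Gint_sup (g : R -> R) a b : (forall t, continuous g t) ->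
  (forall s t, s <= t -> g s <= g t) ->
  (0 <= a /\ 0 <= b) \/ (a <= 0 /\ b <= 0) ->
  Gint g a + Gint g b <= Gint g (a + b).
Proof.
  intros Hc Hm Hab.
  pose proof (Gint_shift g a b Hc) as E.
  assert (RInt g 0 b <= RInt (fun s => g (a + s)) 0 b).
  { destruct Hab as [[Ha Hb]|[Ha Hb]].
    - apply RInt_le; auto; try (apply exR; auto; apply shift_cont; auto).
      intros; apply Hm; lra.
    - rewrite <- (opp_RInt_swap g b 0) by (apply exR; auto).
      rewrite <- (opp_RInt_swap (fun s => g (a + s)) b 0) by (apply exR; apply shift_cont; auto).
      unfold opp; simpl. apply Ropp_le_contravar.
      apply RInt_le; auto; try (apply exR; auto; apply shift_cont; auto).
      intros; apply Hm; lra. }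
  unfold Gint in *. lra.
Qed.

Lemma Zc_facts (c0 : R) (g : R -> R) : (forall t, continuous g t) ->
  ex_RInt_gen (udens c0 g) (Rbar_locally m_infty) (Rbar_locally p_infty) ->
  is_RInt_gen (udens c0 g) (Rbar_locally m_infty) (Rbar_locally p_infty) (Zc c0 g) /\
  (forall a b, a <= b -> RInt (udens c0 g) a b <= Zc c0 g) /\ 0 < Zc c0 g.
Proof.
  intros Hc Hi.
  assert (Hu : forall t, continuous (udens c0 g) t).
  { intros t. apply (ex_derive_continuous (K:=R_AbsRing) (V:=R_NormedModule)).
    pose proof (dens_der c0 g Hc t) as D. unfold udens. auto_derive.
    exists (g t). apply (Gint_der g Hc). }
  assert (I : is_RInt_gen (udens c0 g) (Rbar_locally m_infty) (Rbar_locally p_infty) (Zc c0 g)).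
  { apply (RInt_gen_correct (V:=R_CompleteNormedModule)). auto. }
  assert (B : forall a b, a <= b -> RInt (udens c0 g) a b <= Zc c0 g).
  { apply gen_full_bound; auto. intros; left; apply exp_pos. }
  split; [auto|split; auto].
  apply Rlt_le_trans with (RInt (udens c0 g) 0 1); [|apply B; lra].
  pose proof (RInt_lt (fun _ => 0) (udens c0 g) 0 1 Rlt_0_1 (fun x _ => Hu x)
       (fun x _ => continuous_const 0 x) (fun x _ => exp_pos _)) as L.
  rewrite RInt_const in L. unfold scal in L; simpl in L; unfold mult in L; simpl in L. lra.
Qed.

Lemma dens_cont (c0 : R) (g : R -> R) : (forall t, continuous g t) -> forall t, continuous (dens c0 g) t.
Proof.
  intros Hc t. apply (ex_derive_continuous (K:=R_AbsRing) (V:=R_NormedModule)).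
  eexists. apply (dens_der c0 g Hc t).
Qed.

Lemma dens_sup (c0 : R) (g : R -> R) a b : (forall t, continuous g t) ->
  (forall s t, s <= t -> g s <= g t) -> 0 < c0 -> 0 < Zc c0 g ->
  (0 <= a /\ 0 <= b) \/ (a <= 0 /\ b <= 0) ->
  dens c0 g (a + b) <= Zc c0 g * dens c0 g a * dens c0 g b.
Proof.
  intros Hc Hm Hc0 HZ Hab.
  pose proof (Gint_sup g a b Hc Hm Hab) as S.
  unfold dens, udens, cnorm.
  replace (Zc c0 g * (/ Zc c0 g * exp (- (c0 * Gint g a))) * (/ Zc c0 g * exp (- (c0 * Gint g b))))
    with (/ Zc c0 g * exp (- (c0 * (Gint g a + Gint g b)))).
  2:{ replace (- (c0 * (Gint g a + Gint g b))) with (- (c0 * Gint g a) + - (c0 * Gint g b)) by ring.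
      rewrite exp_plus. field. lra. }
  apply Rmult_le_compat_l; [left; apply Rinv_0_lt_compat; auto|].
  apply exp_le. nra.
Qed.

Lemma dens_I (c0 : R) (g : R -> R) a b : (forall t, continuous g t) ->
  (forall a b, a <= b -> RInt (udens c0 g) a b <= Zc c0 g) -> 0 < Zc c0 g ->
  a <= b -> RInt (dens c0 g) a b <= 1.
Proof.
  intros Hc HB HZ Hab. unfold dens.
  assert (Hu : forall t, continuous (udens c0 g) t).
  { intros t. apply (ex_derive_continuous (K:=R_AbsRing) (V:=R_NormedModule)).
    unfold udens. auto_derive. exists (g t). apply (Gint_der g Hc). }
  rewrite (RInt_scalR (udens c0 g) a b (cnorm c0 g) Hu).
  unfold cnorm. specialize (HB a b Hab).
  apply Rmult_le_reg_l with (Zc c0 g); auto.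
  rewrite <- Rmult_assoc, Rinv_r by lra. nra.
Qed.

Lemma AH_right (c0 : R) (g : R -> R) :
  (forall x, ex_derive g x) -> 0 < c0 ->
  ex_RInt_gen (udens c0 g) (Rbar_locally m_infty) (Rbar_locally p_infty) ->
  (forall s t, s <= t -> g s <= g t) ->
  AHyp (dens c0 g) (fun t => c0 * g t) (Zc c0 g).
Proof.
  intros Hd Hc0 Hi Hm.
  assert (Hc := g_cont g Hd).
  destruct (Zc_facts c0 g Hc Hi) as [_ [HB HZ]].
  constructor.
  - intros t. unfold dens, cnorm, udens. apply Rmult_lt_0_compat; [apply Rinv_0_lt_compat; auto|apply exp_pos].
  - apply dens_der; auto.
  - intros t. apply (continuous_mult (fun _ => c0) g); [apply continuous_const|auto].
  - intros s t Hst. apply Rmult_le_compat_l; [lra|auto].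
  - auto.
  - intros x s Hx Hs. apply dens_sup; auto.
  - intros a b Hab. apply dens_I; auto.
Qed.

Lemma AH_left (c0 : R) (g : R -> R) :
  (forall x, ex_derive g x) -> 0 < c0 ->
  ex_RInt_gen (udens c0 g) (Rbar_locally m_infty) (Rbar_locally p_infty) ->
  (forall s t, s <= t -> g s <= g t) ->
  AHyp (fun s => dens c0 g (- s)) (fun s => - (c0 * g (- s))) (Zc c0 g).
Proof.
  intros Hd Hc0 Hi Hm.
  assert (Hc := g_cont g Hd).
  destruct (Zc_facts c0 g Hc Hi) as [_ [HB HZ]].
  constructor.
  - intros t. unfold dens, cnorm, udens. apply Rmult_lt_0_compat; [apply Rinv_0_lt_compat; auto|apply exp_pos].
  - intros t.
    assert (Do : is_derive Ropp t (-1)) by (auto_derive; [exact I | reflexivity]).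
    pose proof (is_derive_comp (dens c0 g) Ropp t _ _ (dens_der c0 g Hc (- t)) Do) as D.
    replace (- (- (c0 * g (- t)) * dens c0 g (- t))) with
       (scal (-1) (- (c0 * g (- t) * dens c0 g (- t))))
       by (unfold scal; simpl; unfold mult; simpl; ring).
    exact D.
  - intros t. apply (continuous_opp (fun s => c0 * g (- s))).
    apply (continuous_mult (fun _ => c0) (fun s => g (- s))); [apply continuous_const|].
    apply (continuous_comp Ropp g); [|auto].
    apply (ex_derive_continuous (K:=R_AbsRing) (V:=R_NormedModule)). exists (-1).
    auto_derive; [exact I | reflexivity].
  - intros s t Hst. assert (g (- t) <= g (- s)) by (apply Hm; lra). nra.
  - auto.
  - intros x s Hx Hs. replace (- (x + s)) with (- x + - s) by ring. apply dens_sup; auto. right; lra.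
  - intros a b Hab. rewrite (RInt_opp_var (dens c0 g) a b (dens_cont c0 g Hc)).
    apply dens_I; auto. lra.
Qed.

Lemma final_arith (Z p P O Mv Wv Ev mv kx ax c0 dg c2 : R) :
  0 < p -> 0 <= P -> 0 <= mv -> 0 < Z -> 0 < c0 ->
  P <= Z * p ->
  Rabs kx * p * P <= p ^ 2 ->
  Mv <= Wv + Ev * P ->
  Wv + Ev * P <= mv * (ax + 3 * Z) * p ->
  0 <= ax ->
  mv * (ax + 3 * Z) * Rmax 1 (c0 * Rabs dg) <= c2 ->
  Rmin P O <= Z * p /\ Rabs (- (kx * p)) * Rmin O P <= 1 * p ^ 2 /\
  Mv * Rabs (- (c0 * dg)) <= c2 * p /\ Mv <= c2 * p.
Proof.
  intros Hp HP Hm HZ Hc0 H1 H2 H3 H4 Hax H5.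
  assert (Rmin P O <= P) by apply Rmin_l.
  assert (Rmin O P <= P) by apply Rmin_r.
  assert (Hk : Rabs (- (kx * p)) = Rabs kx * p).
  { rewrite Rabs_Ropp, Rabs_mult, (Rabs_pos_eq p) by lra. auto. }
  assert (Hd : Rabs (- (c0 * dg)) = c0 * Rabs dg).
  { rewrite Rabs_Ropp, Rabs_mult, (Rabs_pos_eq c0) by lra. auto. }
  assert (R1 : 1 <= Rmax 1 (c0 * Rabs dg)) by apply Rmax_l.
  assert (R2 : c0 * Rabs dg <= Rmax 1 (c0 * Rabs dg)) by apply Rmax_r.
  assert (0 <= c0 * Rabs dg) by (apply Rmult_le_pos; [lra|apply Rabs_pos]).
  assert (K0 : 0 <= mv * (ax + 3 * Z)) by (apply Rmult_le_pos; lra).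
  set (K := mv * (ax + 3 * Z)) in *.
  set (X := Rmax 1 (c0 * Rabs dg)) in *.
  assert (Mv <= K * p) by lra.
  assert (KX : K <= K * X) by nra.
  split; [lra|]. split.
  - rewrite Hk. assert (0 <= Rabs kx * p) by (apply Rmult_le_pos; [apply Rabs_pos|lra]). nra.
  - rewrite Hd. split.
    + assert (K * c0 * Rabs dg <= c2) by nra.
      destruct (Rle_lt_dec 0 Mv).
      * assert (Mv * (c0 * Rabs dg) <= K * p * (c0 * Rabs dg)) by (apply Rmult_le_compat_r; lra).
        nra.
      * nra.
    + nra.
Qed.

Lemma mf_opp Z k : mf Z (- k) = mf Z k.
Proof.
  unfold mf. destruct (Req_EM_T (- k) 0); destruct (Req_EM_T k 0); try lra.
  rewrite Rabs_Ropp; auto.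
Qed.

Lemma minfac_mf c0 g x : 0 < c0 -> minfac c0 g x = mf (Zc c0 g) (c0 * g x).
Proof.
  intros Hc0. unfold minfac, mf, cnorm. rewrite Rinv_inv.
  destruct (Req_EM_T (g x) 0) as [E|E]; destruct (Req_EM_T (c0 * g x) 0) as [E2|E2]; auto.
  - rewrite E in E2. lra.
  - exfalso. apply Rmult_integral in E2. destruct E2; lra.
Qed.


Theorem lemma4p2 (g : R -> R) (c0 c2 : R)
  (Hdiff : forall x, ex_derive g x)
  (Hc0 : 0 < c0)
  (Hint : ex_RInt_gen (udens c0 g) (Rbar_locally m_infty) (Rbar_locally p_infty))
  (H1mono : forall s t, s <= t -> g s <= g t)
  (H1pos : forall t, 0 < t -> 0 <= g t)
  (H1neg : forall t, t <= 0 -> g t <= 0)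
  (H2 : forall x,
      minfac c0 g x * (Rabs x + 3 / cnorm c0 g) * Rmax 1 (Rmult c0 (Rabs (Derive g x))) <= c2) :
  forall x : R,
    Rmin (1 - cdf c0 g x) (cdf c0 g x) <= (/ cnorm c0 g) * dens c0 g x /\
    Rabs (Derive (dens c0 g) x) * Rmin (cdf c0 g x) (1 - cdf c0 g x)
      <= 1 * (dens c0 g x) ^ 2 /\
    Mfun c0 g x * Rabs (Derive (fun t => Derive (dens c0 g) t / dens c0 g t) x)
      <= c2 * dens c0 g x /\
    Mfun c0 g x <= c2 * dens c0 g x.
Proof.
  intros x.
  assert (Hc := g_cont g Hdiff).
  destruct (Zc_facts c0 g Hc Hint) as [IZ [HB HZ]].
  pose proof (AH_right c0 g Hdiff Hc0 Hint H1mono) as AR.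
  pose proof (AH_left c0 g Hdiff Hc0 Hint H1mono) as AL.
  set (qt := fun s => dens c0 g (- s)) in *.
  assert (Hdc := dens_cont c0 g Hc).
  assert (invc : / cnorm c0 g = Zc c0 g) by (unfold cnorm; apply Rinv_inv).
  assert (three : 3 / cnorm c0 g = 3 * Zc c0 g) by (unfold Rdiv; rewrite invc; auto).
  assert (full1 : is_RInt_gen (dens c0 g) (Rbar_locally m_infty) (Rbar_locally p_infty) 1).
  { pose proof (is_RInt_gen_scal _ (cnorm c0 g) _ IZ) as S.
    replace 1 with (scal (cnorm c0 g) (Zc c0 g)).
    - exact S.
    - unfold scal; simpl; unfold mult; simpl. unfold cnorm. field. lra. }
  assert (LT : forall y, is_RInt_gen (dens c0 g) (Rbar_locally m_infty) (at_point y) (tailR qt (- y))).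
  { intros y. pose proof (transfer_left (dens c0 g) (- y) _ Hdc (proj1 (ah_tail _ _ _ AL (- y)))) as T.
    rewrite Ropp_involutive in T. exact T. }
  assert (cdf_eq : forall y, cdf c0 g y = tailR qt (- y)).
  { intros y. unfold cdf. apply (is_RInt_gen_unique (V:=R_CompleteNormedModule)). apply LT. }
  assert (sum1 : forall y, tailR qt (- y) + tailR (dens c0 g) y = 1).
  { intros y.
    pose proof (is_RInt_gen_Chasles _ y _ _ (LT y) (proj1 (ah_tail _ _ _ AR y))) as Ch.
    transitivity (RInt_gen (dens c0 g) (Rbar_locally m_infty) (Rbar_locally p_infty)).
    - symmetry. apply (is_RInt_gen_unique (V:=R_CompleteNormedModule)). exact Ch.
    - apply (is_RInt_gen_unique (V:=R_CompleteNormedModule)). exact full1. }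
  assert (absfun : (fun t => Rabs t * qt t) = (fun s => (fun t => Rabs t * dens c0 g t) (- s))).
  { apply functional_extensionality; intros s. unfold qt. rewrite Rabs_Ropp. reflexivity. }
  assert (Hac : forall t, continuous (fun t => Rabs t * dens c0 g t) t).
  { intros t. apply (continuous_mult Rabs (dens c0 g)); [apply continuous_Rabs | auto]. }
  assert (LTabs : forall y W, is_RInt_gen (fun t => Rabs t * qt t) (at_point (- y)) (Rbar_locally p_infty) W ->
     is_RInt_gen (fun t => Rabs t * dens c0 g t) (Rbar_locally m_infty) (at_point y) W).
  { intros y W HW. rewrite absfun in HW.
    pose proof (transfer_left _ (- y) W Hac HW) as T. rewrite Ropp_involutive in T. exact T. }
  destruct (ah_W0 _ _ _ AR) as [WR0 WR0b].
  destruct (ah_W0 _ _ _ AL) as [WL0 WL0b].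
  assert (WL0' : is_RInt_gen (fun t => Rabs t * qt t) (at_point (- 0)) (Rbar_locally p_infty)
                   (tailR (fun t => Rabs t * qt t) 0)) by (rewrite Ropp_0; exact WL0).
  pose proof (is_RInt_gen_Chasles _ 0 _ _ (LTabs 0 _ WL0') WR0) as ChE.
  assert (Eeq : EabsY c0 g = tailR (fun t => Rabs t * qt t) 0 + tailR (fun t => Rabs t * dens c0 g t) 0).
  { unfold EabsY. apply (is_RInt_gen_unique (V:=R_CompleteNormedModule)). exact ChE. }
  assert (HE : EabsY c0 g <= Zc c0 g).
  { rewrite Eeq. pose proof (sum1 0) as S0. rewrite Ropp_0 in S0.
    destruct (ah_tail _ _ _ AR 0) as [_ [A0 _]].
    destruct (ah_tail _ _ _ AL 0) as [_ [B0 _]].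
    set (A := tailR (dens c0 g) 0) in *. set (B := tailR qt 0) in *.
    assert (A ^ 2 + B ^ 2 <= 1) by nra.
    nra. }
  assert (Dp : Derive (dens c0 g) x = - (c0 * g x * dens c0 g x)).
  { apply is_derive_unique. apply (dens_der c0 g Hc x). }
  assert (Dq : Derive (fun t => Derive (dens c0 g) t / dens c0 g t) x = - (c0 * Derive g x)).
  { rewrite (Derive_ext _ (fun t => - (c0 * g t))).
    - apply is_derive_unique. auto_derive; [apply Hdiff | rewrite Rmult_1_l; reflexivity].
    - intros t. rewrite (is_derive_unique _ _ _ (dens_der c0 g Hc t)).
      pose proof (ah_pos _ _ _ AR t). field. lra. }
  rewrite Dp, Dq.
  rewrite three in H2. rewrite invc.
  assert (Hpx : 0 < dens c0 g x) by apply (ah_pos _ _ _ AR).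
  specialize (H2 x). rewrite minfac_mf in H2 by auto.
  destruct (Rlt_le_dec 0 x) as [Hx|Hx].
  - assert (Hk : 0 <= c0 * g x) by (pose proof (H1pos x Hx); nra).
    destruct (ah_final _ _ _ x (EabsY c0 g) AR ltac:(lra) Hk HE) as [F1 [F2 [F3 F4]]].
    assert (om : 1 - cdf c0 g x = tailR (dens c0 g) x) by (rewrite cdf_eq; pose proof (sum1 x); lra).
    assert (Egt : EabsY_gt c0 g x = tailR (fun t => Rabs t * dens c0 g t) x).
    { unfold EabsY_gt. apply (is_RInt_gen_unique (V:=R_CompleteNormedModule)). exact F3. }
    assert (HM : Mfun c0 g x <= EabsY_gt c0 g x + EabsY c0 g * (1 - cdf c0 g x)) by apply Rmin_r.
    rewrite om in HM |- *. rewrite Egt in HM.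
    destruct (ah_tail _ _ _ AR x) as [_ [P0 _]].
    assert (Hm0 : 0 <= mf (Zc c0 g) (c0 * g x)).
    { unfold mf. destruct (Req_EM_T (c0 * g x) 0); [lra|].
      assert (0 < / Rabs (c0 * g x)) by (apply Rinv_0_lt_compat; apply Rabs_pos_lt; auto).
      unfold Rmin; destruct (Rle_dec (Zc c0 g) (/ Rabs (c0 * g x))); lra. }
    rewrite Rabs_right in H2 by lra.
    apply (final_arith (Zc c0 g) (dens c0 g x) (tailR (dens c0 g) x) (cdf c0 g x) (Mfun c0 g x)
             (tailR (fun t => Rabs t * dens c0 g t) x) (EabsY c0 g) (mf (Zc c0 g) (c0 * g x)) (c0 * g x) x c0 (Derive g x) c2); auto; lra.
  - assert (Hk : 0 <= - (c0 * g (- - x))) by (rewrite Ropp_involutive; pose proof (H1neg x Hx); nra).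
    destruct (ah_final _ _ _ (- x) (EabsY c0 g) AL ltac:(lra) Hk HE) as [F1 [F2 [F3 F4]]].
    assert (qx : qt (- x) = dens c0 g x) by (unfold qt; rewrite Ropp_involutive; auto).
    cbv beta in F2, F4. rewrite qx in F1, F2, F4. rewrite Ropp_involutive in F2, F4.
    rewrite mf_opp in F4. rewrite Rabs_Ropp in F2.
    assert (Ele : EabsY_le c0 g x = tailR (fun t => Rabs t * qt t) (- x)).
    { unfold EabsY_le. apply (is_RInt_gen_unique (V:=R_CompleteNormedModule)). apply LTabs. exact F3. }
    assert (HM : Mfun c0 g x <= EabsY_le c0 g x + EabsY c0 g * cdf c0 g x) by apply Rmin_l.
    rewrite cdf_eq in HM |- *. rewrite Ele in HM.
    destruct (ah_tail _ _ _ AL (- x)) as [_ [P0 _]].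
    assert (Hm0 : 0 <= mf (Zc c0 g) (c0 * g x)).
    { unfold mf. destruct (Req_EM_T (c0 * g x) 0); [lra|].
      assert (0 < / Rabs (c0 * g x)) by (apply Rinv_0_lt_compat; apply Rabs_pos_lt; auto).
      unfold Rmin; destruct (Rle_dec (Zc c0 g) (/ Rabs (c0 * g x))); lra. }
    rewrite Rabs_left1 in H2 by lra.
    destruct (final_arith (Zc c0 g) (dens c0 g x) (tailR qt (- x)) (1 - tailR qt (- x)) (Mfun c0 g x)
             (tailR (fun t => Rabs t * qt t) (- x)) (EabsY c0 g) (mf (Zc c0 g) (c0 * g x)) (c0 * g x) (- x) c0 (Derive g x) c2) as [G1 [G2 [G3 G4]]];
      auto; try lra.
    split; [|split; auto].
    + pose proof (Rmin_r (1 - tailR qt (- x)) (tailR qt (- x))). lra.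
    + rewrite Rmin_comm. exact G2.
Qed.
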